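(* Let $X,Y$ be finite presheaves of sets on $\mathscr{V}_f$. Then (1) $X\amalg Y$ is finite; (2) $X\times Y$ is finite; (3) every subpresheaf $U\subset X$ is finite; (4) if $X,Y$ are connected with respective basepoints $x,y$, then the wedge $X\vee Y$ is finite.
   Context: $p$ prime, $\mathbb{F}=\mathbb{F}_p$, $\mathscr{V}_f$ finite-dimensional $\mathbb{F}$-vector spaces; presheaves are contravariant functors $\mathscr{V}_f\to$ Sets, coproduct and product taken sectionwise. $\mathscr{F}$ denotes functors $\mathscr{V}_f^{\mathrm{op}}\to$ ($\mathbb{F}$-vector spaces); such a functor is finite if it has a finite composition series. A presheaf $X$ is finite if there is a monomorphism $X\hookrightarrow F_X$ of presheaves of sets with $F_X\in\mathscr{F}$ finite. $X$ is connected if $|X(0)|=1$; its basepoint is the unique element $x$ of $X(0)$ together with its images in each $X(V)$ (under the map induced by $V\to 0$). The wedge $X\vee Y$ is the coproduct of connected presheaves, i.e. $X$ and $Y$ glued along their basepoints (equivalently the subpresheaf $X\times\{y\}\cup\{x\}\times Y$ of $X\times Y$). *)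

(* Defs.v *)
From HB Require Import structures.
From mathcomp Require Import all_boot all_order all_algebra.
From Stdlib Require Import ProofIrrelevance.
Set Implicit Arguments. Unset Strict Implicit. Unset Printing Implicit Defensive.
Import GRing.Theory.
Local Open Scope ring_scope.

(* The category V_f of finite-dimensional F_p-vector spaces is modelled by
   its skeleton: objects are n : nat (standing for F_p^n), a morphism
   F_p^n -> F_p^m is a matrix f : 'M['F_p]_(n,m) acting on row vectors
   (v |-> v *m f), so the composite of f : n -> m and g : m -> k is f *m g. *)

Record presheaf (p : nat) := Presheaf {
  pob :> nat -> Type;
  pact : forall n m, 'M['F_p]_(n, m) -> pob m -> pob n;
  pact1 : forall n (x : pob n), pact 1%:M x = x;
  pactM : forall n m k (f : 'M['F_p]_(n, m)) (g : 'M['F_p]_(m, k)) (x : pob k),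
      pact (f *m g) x = pact f (pact g x)
}.

Record vfunctor (p : nat) := VFunctor {
  vob : nat -> lmodType 'F_p;
  vact : forall n m, 'M['F_p]_(n, m) -> vob m -> vob n;
  vact_lin : forall n m (f : 'M['F_p]_(n, m)) (a : 'F_p) (u v : vob m),
      vact f (a *: u + v) = a *: vact f u + vact f v;
  vact1 : forall n (x : vob n), vact 1%:M x = x;
  vactM : forall n m k (f : 'M['F_p]_(n, m)) (g : 'M['F_p]_(m, k)) (x : vob k),
      vact (f *m g) x = vact f (vact g x)
}.

Definition subfunctor p (F : vfunctor p) (S : forall n, vob F n -> Prop) : Prop :=
  [/\ (forall n, S n 0),
      (forall n u v, S n u -> S n v -> S n (u + v)),
      (forall n (a : 'F_p) v, S n v -> S n (a *: v)) &
      (forall n m (f : 'M['F_p]_(n, m)) v, S m v -> S n (@vact p F n m f v))].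

Definition subfun_le p (F : vfunctor p) (S T : forall n, vob F n -> Prop) : Prop :=
  forall n v, S n v -> T n v.

Definition subfun_eq p (F : vfunctor p) (S T : forall n, vob F n -> Prop) : Prop :=
  forall n v, S n v <-> T n v.

(* T / S is a simple functor, for subfunctors S <= T: T/S is nonzero, and
   (through the correspondence between subfunctors of T/S and subfunctors
   between S and T) T/S has no subfunctors other than 0 and itself. *)
Definition simple_quotient p (F : vfunctor p) (S T : forall n, vob F n -> Prop) : Prop :=
  [/\ subfunctor S, subfunctor T, subfun_le S T,
      (exists n v, T n v /\ ~ S n v) &
      (forall G, subfunctor G -> subfun_le S G -> subfun_le G T ->
         subfun_eq G S \/ subfun_eq G T)].

Definition finite_vfunctor p (F : vfunctor p) : Prop :=
  exists (k : nat) (S : nat -> forall n, vob F n -> Prop),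
    [/\ (forall n v, S 0%N n v <-> v = 0),
        (forall n v, S k n v) &
        (forall i, (i < k)%N -> simple_quotient (S i) (S i.+1))].

Definition finite_presheaf p (X : presheaf p) : Prop :=
  exists (F : vfunctor p) (iota : forall n, X n -> vob F n),
    [/\ finite_vfunctor F,
        (forall n, injective (iota n)) &
        (forall n m (f : 'M['F_p]_(n, m)) (x : X m),
           iota n (pact f x) = @vact p F n m f (iota m x))].

Section Constructions.
Variable p : nat.

Definition coprod_act (X Y : presheaf p) n m (f : 'M['F_p]_(n, m))
  (z : (X m + Y m)%type) : (X n + Y n)%type :=
  match z with inl x => inl (pact f x) | inr y => inr (pact f y) end.

Lemma coprod_act1 (X Y : presheaf p) n (z : (X n + Y n)%type) :
  coprod_act 1%:M z = z.
Proof. by case: z => z /=; rewrite pact1. Qed.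

Lemma coprod_actM (X Y : presheaf p) n m k (f : 'M['F_p]_(n, m))
  (g : 'M['F_p]_(m, k)) (z : (X k + Y k)%type) :
  coprod_act (f *m g) z = coprod_act f (coprod_act g z).
Proof. by case: z => z /=; rewrite pactM. Qed.

Definition coprod_presheaf (X Y : presheaf p) : presheaf p :=
  @Presheaf p (fun n => (X n + Y n)%type) (@coprod_act X Y)
    (@coprod_act1 X Y) (@coprod_actM X Y).

Definition prod_act (X Y : presheaf p) n m (f : 'M['F_p]_(n, m))
  (z : (X m * Y m)%type) : (X n * Y n)%type :=
  (pact f z.1, pact f z.2).

Lemma prod_act1 (X Y : presheaf p) n (z : (X n * Y n)%type) :
  prod_act 1%:M z = z.
Proof. by case: z => a b; rewrite /prod_act /= !pact1. Qed.

Lemma prod_actM (X Y : presheaf p) n m k (f : 'M['F_p]_(n, m))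
  (g : 'M['F_p]_(m, k)) (z : (X k * Y k)%type) :
  prod_act (f *m g) z = prod_act f (prod_act g z).
Proof. by case: z => a b; rewrite /prod_act /= !pactM. Qed.

Definition prod_presheaf (X Y : presheaf p) : presheaf p :=
  @Presheaf p (fun n => (X n * Y n)%type) (@prod_act X Y)
    (@prod_act1 X Y) (@prod_actM X Y).

Definition subpresheaf (X : presheaf p) (U : forall n, X n -> Prop) : Prop :=
  forall n m (f : 'M['F_p]_(n, m)) (x : X m), U m x -> U n (pact f x).

Definition sub_act (X : presheaf p) (U : forall n, X n -> Prop)
  (hU : subpresheaf U) n m (f : 'M['F_p]_(n, m)) (z : {x : X m | U m x}) :
  {x : X n | U n x} :=
  exist _ (pact f (proj1_sig z)) (hU n m f _ (proj2_sig z)).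

Lemma sub_act1 (X : presheaf p) U (hU : subpresheaf U) n (z : {x : X n | U n x}) :
  sub_act hU 1%:M z = z.
Proof.
case: z => x ux; rewrite /sub_act /=.
move: (hU n n 1%:M x ux); rewrite pact1 => h.
by rewrite (proof_irrelevance _ h ux).
Qed.

Lemma sub_actM (X : presheaf p) U (hU : subpresheaf U) n m k (f : 'M['F_p]_(n, m))
  (g : 'M['F_p]_(m, k)) (z : {x : X k | U k x}) :
  sub_act hU (f *m g) z = sub_act hU f (sub_act hU g z).
Proof.
case: z => x ux; rewrite /sub_act /=.
move: (hU n k (f *m g) x ux) (hU n m f _ (hU m k g x ux)).
rewrite pactM => h1 h2.
by rewrite (proof_irrelevance _ h1 h2).
Qed.

Definition sub_presheaf (X : presheaf p) (U : forall n, X n -> Prop)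
  (hU : subpresheaf U) : presheaf p :=
  @Presheaf p (fun n => {x : X n | U n x}) (@sub_act X U hU)
    (@sub_act1 X U hU) (@sub_actM X U hU).

Definition connected (X : presheaf p) : Prop :=
  exists x : X 0%N, forall y : X 0%N, y = x.

Definition basept (X : presheaf p) (x : X 0%N) n : X n :=
  pact (0 : 'M['F_p]_(n, 0)) x.

Definition wedge_pred (X Y : presheaf p) (x : X 0%N) (y : Y 0%N) n
  (z : prod_presheaf X Y n) : Prop :=
  z.2 = basept y n \/ z.1 = basept x n.

Lemma basept_act (X : presheaf p) (x : X 0%N) n m (f : 'M['F_p]_(n, m)) :
  pact f (basept x m) = basept x n.
Proof. by rewrite /basept -pactM mulmx0. Qed.

Lemma wedge_sub (X Y : presheaf p) (x : X 0%N) (y : Y 0%N) :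
  subpresheaf (wedge_pred x y).
Proof.
move=> n m f [a b]; rewrite /wedge_pred /= => -[-> | ->].
  by left; rewrite basept_act.
by right; rewrite basept_act.
Qed.

Arguments wedge_sub [X Y] x y.

Definition wedge_presheaf (X Y : presheaf p) (x : X 0%N) (y : Y 0%N) : presheaf p :=
  sub_presheaf (wedge_sub x y).

End Constructions.

(* Main.v *)
Require Import Defs.
From mathcomp Require Import all_boot all_order all_algebra.
From Stdlib Require Import ProofIrrelevance Classical.
Set Implicit Arguments. Unset Strict Implicit. Unset Printing Implicit Defensive.
Import GRing.Theory.
Local Open Scope ring_scope.

Section Aux.
Variable p : nat.

Lemma vact0 (F : vfunctor p) n m (f : 'M['F_p]_(n, m)) : vact (v0:=F) f 0 = 0.
Proof.
have := @vact_lin p F _ _ f 1 0 0; rewrite !scale1r addr0 => h.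
by apply: (@addrI _ (vact (v0:=F) f 0)); rewrite addr0 -h.
Qed.

Lemma vactD (F : vfunctor p) n m (f : 'M['F_p]_(n, m)) u v :
  vact (v0:=F) f (u + v) = vact (v0:=F) f u + vact (v0:=F) f v.
Proof. by have := @vact_lin p F _ _ f 1 u v; rewrite !scale1r. Qed.

Lemma vactZ (F : vfunctor p) n m (f : 'M['F_p]_(n, m)) a u :
  vact (v0:=F) f (a *: u) = a *: vact (v0:=F) f u.
Proof. by have := @vact_lin p F _ _ f a u 0; rewrite !addr0 vact0 addr0. Qed.

Definition sumF (F G : vfunctor p) : vfunctor p.
refine (@VFunctor p (fun n => (vob F n * vob G n)%type : lmodType 'F_p)
  (fun n m f z => (vact (v0:=F) f z.1, vact (v0:=G) f z.2)) _ _ _).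
- by move=> n m f a [u1 u2] [v1 v2] /=; rewrite !vact_lin.
- by move=> n [u v] /=; rewrite !vact1.
- by move=> n m k f g [u v] /=; rewrite !vactM.
Defined.

Lemma pairD (F G : vfunctor p) n (u1 v1 : vob F n) (u2 v2 : vob G n) :
  ((u1, u2) : vob (sumF F G) n) + (v1, v2) = (u1 + v1, u2 + v2).
Proof. by []. Qed.
Lemma pairZ (F G : vfunctor p) n a (u1 : vob F n) (u2 : vob G n) :
  a *: ((u1, u2) : vob (sumF F G) n) = (a *: u1, a *: u2).
Proof. by []. Qed.
Lemma pairB (F G : vfunctor p) n (u1 v1 : vob F n) (u2 v2 : vob G n) :
  ((u1, u2) : vob (sumF F G) n) - (v1, v2) = (u1 - v1, u2 - v2).
Proof. by []. Qed.
Lemma pair0 (F G : vfunctor p) n : (0 : vob (sumF F G) n) = (0, 0).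
Proof. by []. Qed.

Definition constF : vfunctor p.
refine (@VFunctor p (fun n => ('F_p)^o : lmodType 'F_p)
  (fun n m f z => z) _ _ _) => //.
Defined.

Lemma sub_opp (F : vfunctor p) S n u v : subfunctor (F:=F) S ->
  S n u -> S n v -> S n (u - v).
Proof.
case=> _ hD hZ _ hu hv; apply: hD => //.
by rewrite -scaleN1r; apply: hZ.
Qed.

Lemma subf_prod (F G : vfunctor p) S B : subfunctor (F:=F) S -> subfunctor (F:=G) B ->
  subfunctor (F:=sumF F G) (fun n z => S n z.1 /\ B n z.2).
Proof.
case=> s0 sD sZ sA [b0 bD bZ bA]; split.
- by move=> n; split.
- by move=> n [u1 u2] [v1 v2] /= [h1 h2] [h3 h4]; split; [apply: sD|apply: bD].
- by move=> n a [u1 u2] /= [h1 h2]; split; [apply: sZ|apply: bZ].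
- by move=> n m f [u1 u2] /= [h1 h2]; split; [apply: sA|apply: bA].
Qed.

Lemma sq_left (F G : vfunctor p) S T B :
  simple_quotient (F:=F) S T -> subfunctor (F:=G) B ->
  simple_quotient (F:=sumF F G) (fun n z => S n z.1 /\ B n z.2)
                                (fun n z => T n z.1 /\ B n z.2).
Proof.
case=> sS sT le [n0 [v0 [hT hS]]] mx sB.
have sB' := sB; case: sB' => b0 bD bZ bA.
have sS' := sS; case: sS' => s0 sD sZ sA.
split.
- exact: subf_prod.
- exact: subf_prod.
- by move=> n [u v] /= [h1 h2]; split => //; apply: le.
- by exists n0, (v0, 0); split => //= -[].
move=> H sH le1 le2.
have sH' := sH; case: sH' => h0 hD hZ hA.
pose H' := fun n u => H n (u, 0 : vob G n).
have sH'' : subfunctor (F:=F) H'.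
  split.
  - by move=> n; apply: h0.
  - by move=> n u v hu hv; have := hD _ _ _ hu hv; rewrite /H' /= pairD addr0.
  - by move=> n a v hv; have := hZ _ a _ hv; rewrite /H' /= pairZ scaler0.
  - by move=> n m f v hv; have := hA _ _ f _ hv; rewrite /H' /= vact0.
have l1 : subfun_le S H' by move=> n v hv; apply: le1; split => //=.
have l2 : subfun_le H' T by move=> n v /le2 [].
have hv0 k v : B k v -> H k (0, v) by move=> hv; apply: le1; split.
case: (mx H' sH'' l1 l2) => [eqS|eqT]; [left|right] => n [u v]; split.
- move=> huv; have [_ hv] := le2 _ _ huv; split => //.
  apply/eqS; rewrite /H'.
  have := sub_opp sH huv (hv0 _ _ hv); rewrite pairB subr0 subrr //.
- by move=> h; apply: le1.
- by move=> h; apply: le2.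
- move=> [hu hv] /=.
  have := hD _ _ _ (proj2 (eqT _ _) hu : H n (u, 0)) (hv0 _ _ hv).
  by rewrite pairD addr0 add0r.
Qed.

Lemma sq_right (F G : vfunctor p) A S T :
  subfunctor (F:=F) A -> simple_quotient (F:=G) S T ->
  simple_quotient (F:=sumF F G) (fun n z => A n z.1 /\ S n z.2)
                                (fun n z => A n z.1 /\ T n z.2).
Proof.
move=> sA [sS sT le [n0 [v0 [hT hS]]] mx].
have sA' := sA; case: sA' => b0 bD bZ bA.
have sS' := sS; case: sS' => s0 sD sZ sA2.
split.
- exact: subf_prod.
- exact: subf_prod.
- by move=> n [u v] /= [h1 h2]; split => //; apply: le.
- by exists n0, (0, v0); split => //= -[].
move=> H sH le1 le2.
have sH' := sH; case: sH' => h0 hD hZ hA.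
pose H' := fun n v => H n (0 : vob F n, v).
have sH'' : subfunctor (F:=G) H'.
  split.
  - by move=> n; apply: h0.
  - by move=> n u v hu hv; have := hD _ _ _ hu hv; rewrite /H' /= pairD addr0.
  - by move=> n a v hv; have := hZ _ a _ hv; rewrite /H' /= pairZ scaler0.
  - by move=> n m f v hv; have := hA _ _ f _ hv; rewrite /H' /= vact0.
have l1 : subfun_le S H' by move=> n v hv; apply: le1; split => //=.
have l2 : subfun_le H' T by move=> n v /le2 [].
have hu0 k u : A k u -> H k (u, 0) by move=> hu; apply: le1; split.
case: (mx H' sH'' l1 l2) => [eqS|eqT]; [left|right] => n [u v]; split.
- move=> huv; have [hu _] := le2 _ _ huv; split => //.
  apply/eqS; rewrite /H'.
  have := sub_opp sH huv (hu0 _ _ hu); rewrite pairB subr0 subrr //.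
- by move=> h; apply: le1.
- by move=> h; apply: le2.
- move=> [hu hv] /=.
  have := hD _ _ _ (hu0 _ _ hu) (proj2 (eqT _ _) hv : H n (0, v)).
  by rewrite pairD addr0 add0r.
Qed.

Lemma sub0_subfunctor (F : vfunctor p) S :
  (forall n v, S n v <-> v = 0) -> subfunctor (F:=F) S.
Proof.
move=> h; split.
- by move=> n; apply/h.
- by move=> n u v /h -> /h ->; apply/h; rewrite addr0.
- by move=> n a v /h ->; apply/h; rewrite scaler0.
- by move=> n m f v /h ->; apply/h; rewrite vact0.
Qed.

Lemma finite_sum (F G : vfunctor p) :
  finite_vfunctor F -> finite_vfunctor G -> finite_vfunctor (sumF F G).
Proof.
move=> [kF [SF [SF0 SFk SFs]]] [kG [SG [SG0 SGk SGs]]].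
exists (kF + kG)%N, (fun i n z => SF (minn i kF) n z.1 /\ SG (i - kF)%N n z.2).
split.
- move=> n [u v]; rewrite min0n sub0n pair0; split.
    by move=> /= [/SF0 -> /SG0 ->].
  by case=> -> ->; split; [apply/SF0|apply/SG0].
- move=> n [u v]; rewrite (minn_idPr (leq_addr _ _)) addKn; split; [apply: SFk|apply: SGk].
move=> i hi; case: (ltnP i kF) => hik.
- rewrite (minn_idPl hik).
  have e1 : (i - kF = 0)%N by apply/eqP; rewrite subn_eq0 ltnW.
  have e2 : (i.+1 - kF = 0)%N by apply/eqP; rewrite subn_eq0.
  rewrite e1 e2.
  apply: sq_left; first exact: SFs.
  exact: sub0_subfunctor.
- rewrite (minn_idPr (leqW hik)) (subSn hik).
  apply: sq_right.
    split => //.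
  apply: SGs; rewrite ltn_subLR //.
Qed.

Lemma finite_const : finite_vfunctor constF.
Proof.
exists 1%N, (fun i n v => if i is 0%N then v = 0 else True); split => //.
move=> i; rewrite ltnS leqn0 => /eqP -> /=.
split.
- by apply: sub0_subfunctor.
- by split.
- by [].
- by exists 0%N, (1 : 'F_p); split => //; apply/eqP; exact: oner_neq0.
move=> H sH le1 le2.
case: (classic (forall n v, H n v -> v = 0)) => hH.
  by left => n v; split; [apply: hH|apply: le1].
right => n v; split => // _.
have [m hm] := not_all_ex_not _ _ hH.
have [w hw'] := not_all_ex_not _ _ hm.
have [hw nw] := imply_to_and _ _ hw'.
case: sH => _ _ hZ hA.
have h1 : H m (1 : 'F_p).
  have := hZ _ (w^-1) _ hw.
  by rewrite /GRing.scale /= mulVf //; apply/eqP.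
have h2 : H n (1 : 'F_p) by exact: (hA n m 0 _ h1).
have := hZ _ v _ h2.
by rewrite /GRing.scale /= mulr1.
Qed.

End Aux.

Lemma fin_sub p (Z : presheaf p) (U : forall n, Z n -> Prop) (hU : subpresheaf U) :
  finite_presheaf Z -> finite_presheaf (sub_presheaf hU).
Proof.
move=> [F [iota [fF inj nat]]].
exists F, (fun n z => iota n (proj1_sig z)); split => //.
- move=> n [x hx] [y hy] /= /inj e; subst y.
  by rewrite (proof_irrelevance _ hx hy).
- by move=> n m f [x hx] /=; rewrite nat.
Qed.

Lemma fin_prod p (X Y : presheaf p) :
  finite_presheaf X -> finite_presheaf Y -> finite_presheaf (prod_presheaf X Y).
Proof.
move=> [F [iF [fF injF natF]]] [G [iG [fG injG natG]]].
exists (sumF F G), (fun n z => (iF n z.1, iG n z.2)); split.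
- exact: finite_sum.
- by move=> n [x1 y1] [x2 y2] /= [/injF -> /injG ->].
- by move=> n m f [x y] /=; rewrite natF natG.
Qed.

Lemma fin_coprod p (X Y : presheaf p) :
  finite_presheaf X -> finite_presheaf Y -> finite_presheaf (coprod_presheaf X Y).
Proof.
move=> [F [iF [fF injF natF]]] [G [iG [fG injG natG]]].
exists (sumF (sumF F G) (constF p)),
  (fun n z => match z with
              | inl x => ((iF n x, 0), 0 : ('F_p)^o)
              | inr y => ((0, iG n y), 1 : ('F_p)^o) end); split.
- by apply: finite_sum; [apply: finite_sum|apply: finite_const].
- move=> n [x1|y1] [x2|y2] /=.
  + by case=> /injF ->.
  + by move=> [_ _ /eqP]; rewrite eq_sym oner_eq0.
  + by move=> [_ _ /eqP]; rewrite oner_eq0.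
  + by case=> /injG ->.
- by move=> n m f [x|y] /=; rewrite ?natF ?natG vact0.
Qed.

Theorem lemma3p4 (p : nat) (hp : prime p) (X Y : presheaf p) :
  finite_presheaf X -> finite_presheaf Y ->
  [/\ finite_presheaf (coprod_presheaf X Y),
      finite_presheaf (prod_presheaf X Y),
      (forall (U : forall n, X n -> Prop) (hU : subpresheaf U),
         finite_presheaf (sub_presheaf hU)) &
      (forall (x : X 0%N) (y : Y 0%N), connected X -> connected Y ->
         finite_presheaf (wedge_presheaf x y))].
Proof.
move=> fX fY; split.
- exact: fin_coprod.
- exact: fin_prod.
- by move=> U hU; apply: fin_sub.
- by move=> x y _ _; apply: fin_sub; apply: fin_prod.
Qed.
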